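(* Let $\mathbb{F}$ be a field of characteristic $2$, $D$ an oriented diagram of a link $L$, $w_c\in\mathbb{F}$ weights for the components, $(C(D),d=d_0+d_1)$ the deformed complex, and $p$ a marked point on $D$ away from the crossings. Then $dX_p=X_pd$.
   Context: For crossings $1,\dots,n$ and $I\in\{0,1\}^n$ let $I$ also denote the set of circles of the complete resolution (Khovanov $0$/$1$-smoothings). With $V=\mathbb{F}[x]/(x^2)$, $V(I)=\bigotimes_{\text{circles}}V$, identified with $\mathbb{F}[x_1,\dots,x_{p(I)}]/(x_j^2)$ with one variable per circle, and $C(D)=\bigoplus_IV(I)$. For an edge $(I,J)$ ($J$ from $I$ by changing digit $i$ from $0$ to $1$), $\mathcal{A}(I,J)$ is the saddle merge/split map ($m$, or $\Delta(1)=1\otimes x+x\otimes1$, $\Delta(x)=x\otimes x$) and $\mathcal{A}(J,I)$ is the map of the reversed saddle. $d_0=\sum_{(I,J)}\mathcal{A}(I,J)$ and $d_1=\sum_{(I,J)}s(i)(w^i_{\mathrm{over}}-w^i_{\mathrm{under}})\mathcal{A}(J,I)$ (signs are irrelevant in characteristic 2), where $w^i_{\mathrm{over/under}}$ are the weights of the over/under strands at crossing $i$. For a marked point $p$, $X_p:C(D)\to C(D)$ multiplies $y\in V(I)$ by the variable $x_p$ of the circle of $I$ through $p$. *)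

(* Defs.v *)
From HB Require Import structures.
From mathcomp Require Import all_boot all_order all_algebra.
Set Implicit Arguments. Unset Strict Implicit. Unset Printing Implicit Defensive.
Import GRing.Theory.
Local Open Scope ring_scope.

Section Khovanov.
Variables (E : finType) (n : nat).

(* A diagram with crossings 'I_n and edges (arcs between crossings, or
   crossingless circles) E.  Crossing i is the PD tuple
   X[xa i, xb i, xc i, xd i]: xa i is the incoming edge of the under strand,
   then the edges are listed counterclockwise; the under strand is
   xa i -> xc i, the over strand is xb i -- xd i, traversed xb -> xd when
   ovdir i is true and xd -> xb otherwise. *)
Record pd := PD {
  xa : 'I_n -> E; xb : 'I_n -> E; xc : 'I_n -> E; xd : 'I_n -> E;
  ovdir : 'I_n -> bool }.

Variable D : pd.

Definition over_in i := if ovdir D i then xb D i else xd D i.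
Definition over_out i := if ovdir D i then xd D i else xb D i.
Definition in_count (e : E) : nat :=
  (\sum_(i < n) ((xa D i == e) + (over_in i == e)))%N.
Definition out_count (e : E) : nat :=
  (\sum_(i < n) ((xc D i == e) + (over_out i == e)))%N.
(* well-formed oriented diagram: every edge enters exactly one crossing
   slot and leaves exactly one, or touches no crossing (a free circle). *)
Definition pd_wf : Prop :=
  forall e, in_count e = out_count e /\ (in_count e <= 1)%N.

Definition pair_match (x y e f : E) : bool :=
  ((e == x) && (f == y)) || ((e == y) && (f == x)).

(* components of the link: the strands go straight through each crossing *)
Definition link_rel : rel E := fun e f =>
  [exists i, pair_match (xa D i) (xc D i) e f || pair_match (xb D i) (xd D i) e f].

Definition state := {ffun 'I_n -> bool}.

Definition smooth_rel (I : state) : rel E := fun e f =>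
  [exists i, if I i
             then pair_match (xa D i) (xd D i) e f || pair_match (xb D i) (xc D i) e f
             else pair_match (xa D i) (xb D i) e f || pair_match (xc D i) (xd D i) e f].

Definition circ (I : state) (e : E) : {set E} := [set f | connect (smooth_rel I) e f].

Definition closedb (I : state) (S : {set E}) : bool :=
  [forall e, forall f, connect (smooth_rel I) e f ==> ((e \in S) == (f \in S))].

Definition closure (I : state) (S : {set E}) : {set E} :=
  [set e | [exists f in S, connect (smooth_rel I) f e]].

(* Basis of C(D): pairs (I, S), S a set of circles of I (a union of circles),
   standing for the monomial prod_{circles c in S} x_c in V(I). *)
Definition gen := {g : state * {set E} | closedb g.1 g.2}.

Definition flip (I : state) (i : 'I_n) : state :=
  [ffun j => if j == i then ~~ I i else I j].

(* representative edges of the two arcs of the smoothing of I at crossing i *)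
Definition reps (I : state) (i : 'I_n) : E * E :=
  if I i then (xa D i, xb D i) else (xa D i, xc D i).

Variable F : fieldType.

Definition C := {ffun gen -> F}.

Definition bvec (I : state) (S : {set E}) : C :=
  [ffun g : gen => ((val g == (I, S)) : nat)%:R].

Definition linext (f : state -> {set E} -> C) (v : C) : C :=
  [ffun h : gen => \sum_(g : gen) v g * f (val g).1 (val g).2 h].

(* saddle map from V(K) to V(K') for the crossing i (K' = K with digit i
   changed): merge m, or split Delta(1) = 1*x + x*1, Delta(x) = x*x.
   (The remaining "1 circle -> 1 circle" case cannot occur for a planar
   diagram; the map is then 0.) *)
Definition saddle (K K' : state) (i : 'I_n) (S : {set E}) : C :=
  let s := reps K i in let t := reps K' i in
  if ~~ connect (smooth_rel K) s.1 s.2 then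
    (if (s.1 \in S) && (s.2 \in S) then 0 else bvec K' (closure K' S))
  else if ~~ connect (smooth_rel K') t.1 t.2 then
    (if s.1 \in S then bvec K' S
     else bvec K' (S :|: circ K' t.1) + bvec K' (S :|: circ K' t.2))
  else 0.

Definition Xp (p : E) : C -> C :=
  linext (fun I S => if p \in S then 0 else bvec I (S :|: circ I p)).

Definition d0 : C -> C :=
  linext (fun I S => \sum_(i < n | ~~ I i) saddle I (flip I i) i S).

(* sgn : the signs s(i) = (-1)^(sgn i); w : weight of the component of
   each edge; over strand at i contains xb i, under strand contains xa i *)
Definition d1 (sgn : 'I_n -> bool) (w : E -> F) : C -> C :=
  linext (fun I S => \sum_(i < n | I i)
    [ffun h : gen => ((-1) ^+ sgn i) * (w (xb D i) - w (xa D i)) * saddle I (flip I i) i S h]).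

Definition dd (sgn : 'I_n -> bool) (w : E -> F) (v : C) : C :=
  d0 v + d1 sgn w v.

End Khovanov.

(* Main.v *)
Require Import Defs.
From HB Require Import structures.
From mathcomp Require Import all_boot all_order all_algebra.
From mathcomp Require Import zify.
Set Implicit Arguments. Unset Strict Implicit. Unset Printing Implicit Defensive.

Lemma connect_inv (T : finType) (e : rel T) (P : pred T) :
  (forall y z, P y -> e y z -> P z) -> forall x y, P x -> connect e x y -> P y.
Proof.
move=> Hs x y Px /connectP [p]; elim: p x Px => [|z p IH] x Px /=; first by move=> _ ->.
by move=> /andP [exz pth] yE; apply: (IH z (Hs _ _ Px exz) pth yE).
Qed.

Section G.
Variables (E : finType) (n : nat) (D : pd E n).
Local Notation sr := (smooth_rel D).

Lemma pm_sym (x y e f : E) : pair_match x y e f = pair_match x y f e.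
Proof. by rewrite /pair_match orbC !(andbC (f == _)). Qed.

Lemma sr_sym K : symmetric (sr K).
Proof.
move=> x y; apply: eq_existsb => j; case: (K j); by rewrite !(pm_sym _ _ x).
Qed.

Lemma conn_sym K x y : connect (sr K) x y = connect (sr K) y x.
Proof. exact: (sym_connect_sym (sr_sym K)). Qed.

Lemma flip_i (K : state n) i : flip K i i = ~~ K i.
Proof. by rewrite /flip ffunE eqxx. Qed.

Lemma flip_j (K : state n) i j : j != i -> flip K i j = K j.
Proof. by move=> h; rewrite /flip ffunE (negbTE h). Qed.

Lemma flipK (K : state n) i : flip (flip K i) i = K.
Proof.
apply/ffunP=> j; rewrite !ffunE eqxx; case: eqP => [->|//]; by rewrite negbK.
Qed.

Definition T i := [:: xa D i; xb D i; xc D i; xd D i].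

Lemma pmT (u v x y : E) : pair_match u v x y -> (x \in [:: u; v]) && (y \in [:: u; v]).
Proof.
rewrite /pair_match !inE; by case/orP=> /andP[/eqP-> /eqP->]; rewrite !eqxx ?orbT.
Qed.

Lemma sr_flip K i x y : sr K x y -> sr (flip K i) x y || ((x \in T i) && (y \in T i)).
Proof.
case/existsP=> j h; case: (eqVneq j i) => [ji|ji].
  subst j; apply/orP; right; move: h; rewrite /T.
  by case: (K i) => /orP[] /pmT /andP[]; rewrite !inE => /orP[]/eqP-> /orP[]/eqP->;
    rewrite !eqxx ?orbT.
by apply/orP; left; apply/existsP; exists j; rewrite flip_j.
Qed.

Lemma sr_flip_back K i x y : sr (flip K i) x y -> sr K x y || ((x \in T i) && (y \in T i)).
Proof. by move=> h; have := sr_flip i h; rewrite flipK. Qed.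

Lemma sr_i (K : state n) i x y :
  (if K i then pair_match (xa D i) (xd D i) x y || pair_match (xb D i) (xc D i) x y
   else pair_match (xa D i) (xb D i) x y || pair_match (xc D i) (xd D i) x y) -> sr K x y.
Proof. by move=> h; apply/existsP; exists i. Qed.

Definition r0 (K : state n) i : rel E := fun x y =>
  [exists j, (j != i) && (if K j
             then pair_match (xa D j) (xd D j) x y || pair_match (xb D j) (xc D j) x y
             else pair_match (xa D j) (xb D j) x y || pair_match (xc D j) (xd D j) x y)].

Lemma r0_sym K i : symmetric (r0 K i).
Proof.
move=> x y; apply: eq_existsb => j; case: (K j); by rewrite !(pm_sym _ _ x).
Qed.

Lemma r0_sr K i x y : connect (r0 K i) x y -> connect (sr K) x y.
Proof.
apply: connect_sub => u v /existsP [j /andP [_ h]]; apply: connect1; apply/existsP; by exists j.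
Qed.

Lemma r0_srf K i x y : connect (r0 K i) x y -> connect (sr (flip K i)) x y.
Proof.
apply: connect_sub => u v /existsP [j /andP [ji h]]; apply: connect1; apply/existsP;
by exists j; rewrite flip_j.
Qed.

Hypothesis hD : pd_wf D.

Definition fj j e := ((xa D j == e) + (xb D j == e) + (xc D j == e) + (xd D j == e))%N.

Lemma cnt_even e : 2 %| \sum_j fj j e.
Proof.
have [h _] := hD e.
have -> : (\sum_j fj j e = in_count D e + out_count D e)%N.
  rewrite /in_count /out_count -big_split; apply: eq_bigr => j _.
  rewrite /fj /over_in /over_out; case: (ovdir D j); rewrite /=; lia.
by rewrite h addnn -mul2n dvdn_mulr.
Qed.

Lemma sum_ind (A : {set E}) u : (\sum_(e in A) (u == e) = (u \in A))%N.
Proof.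
rewrite big_mkcond (bigD1 u) //= eqxx big1 => [|e /negbTE ne]; first by case: (u \in A).
by rewrite eq_sym ne; case: (e \in A).
Qed.

Lemma CL K i : [|| connect (r0 K i) (xa D i) (xb D i),
  connect (r0 K i) (xa D i) (xc D i) | connect (r0 K i) (xa D i) (xd D i)].
Proof.
set a := xa D i; set b := xb D i; set c := xc D i; set d := xd D i.
case: (eqVneq a b) => [<-|nab]; first by rewrite connect0.
case: (eqVneq a c) => [<-|nac]; first by rewrite connect0 orbT.
case: (eqVneq a d) => [<-|nad]; first by rewrite connect0 !orbT.
apply/negPn/negP; rewrite !negb_or => /and3P [nb nc nd].
pose Cs := [set e | connect (r0 K i) a e].
pose deg e := (\sum_(j | j != i) fj j e)%N.
have cntE e : (\sum_j fj j e = fj i e + deg e)%N by rewrite (bigD1 i).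
have memC u v : r0 K i u v -> (u \in Cs) = (v \in Cs).
  move=> h; rewrite !inE; apply/idP/idP => h2; apply: connect_trans h2 (connect1 _) => //.
  by rewrite r0_sym.
have sumC : 2 %| \sum_(e in Cs) deg e.
  rewrite exchange_big /=; apply: dvdn_sum => j ji.
  rewrite /fj !big_split /= !sum_ind.
  case Kj: (K j).
    rewrite (memC (xa D j) (xd D j)); last first.
      by apply/existsP; exists j; rewrite ji Kj /pair_match !eqxx.
    rewrite (memC (xb D j) (xc D j)); last first.
      by apply/existsP; exists j; rewrite ji Kj /pair_match !eqxx !orbT.
    by case: (xd D j \in Cs); case: (xc D j \in Cs).
  rewrite (memC (xa D j) (xb D j)); last first.
    by apply/existsP; exists j; rewrite ji Kj /pair_match !eqxx.
  rewrite (memC (xc D j) (xd D j)); last first.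
    by apply/existsP; exists j; rewrite ji Kj /pair_match !eqxx !orbT.
  by case: (xb D j \in Cs); case: (xd D j \in Cs).
have aC : a \in Cs by rewrite inE connect0.
move: sumC; rewrite (bigD1 a) //=.
have rest : 2 %| \sum_(e in Cs | e != a) deg e.
  apply: dvdn_sum => e /andP [eC nea].
  have : fj i e = 0%N.
    rewrite /fj -/a -/b -/c -/d eq_sym (negbTE nea).
    have neb : b != e by apply: contraNneq nb => ->; rewrite inE in eC.
    have nec : c != e by apply: contraNneq nc => ->; rewrite inE in eC.
    have ned : d != e by apply: contraNneq nd => ->; rewrite inE in eC.
    by rewrite (negbTE neb) (negbTE nec) (negbTE ned).
  by move=> h0; have := cnt_even e; rewrite cntE h0.
rewrite (dvdn_addl _ rest) => hdeg.
have := cnt_even a; rewrite cntE /fj -/a -/b -/c -/d eqxx eq_sym (negbTE nab)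
  eq_sym (negbTE nac) eq_sym (negbTE nad) /=.
by rewrite (dvdn_addl _ hdeg).
Qed.


Definition Ucl (K : state n) i z :=
  connect (sr K) (reps D K i).1 z || connect (sr K) (reps D K i).2 z.

Lemma Ucl_trans K i y z : Ucl K i y -> connect (sr K) y z -> Ucl K i z.
Proof.
by rewrite /Ucl => /orP [h|h] h2; apply/orP; [left|right]; apply: connect_trans h h2.
Qed.

Lemma Ucl_back K i x y : Ucl K i y -> connect (sr K) x y -> Ucl K i x.
Proof. by move=> h h2; apply: Ucl_trans h _; rewrite conn_sym. Qed.

Ltac stp Ki := apply: connect1; match type of Ki with ?K ?j = _ => apply: (@sr_i _ j) end; rewrite ?flip_i Ki /pair_match !eqxx /= ?orbT.

Lemma TU K i u : u \in T i -> Ucl K i u.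
Proof.
rewrite /Ucl /reps /T !inE; case Ki: (K i) => /= /or4P [] /eqP ->; rewrite ?connect0 ?orbT //; apply/orP; first [ by left; stp Ki | by right; stp Ki ]. Qed.


Lemma KL K i : ~~ connect (sr K) (reps D K i).1 (reps D K i).2 ->
  forall x y, connect (sr K) x y -> connect (sr (flip K i)) x y.
Proof.
move=> nc.
have Tc : forall u, u \in T i -> connect (sr (flip K i)) (xa D i) u.
  have := CL K i; move: nc; rewrite /reps /T; case Ki: (K i) => /= nc hCL.
    have cb : connect (sr K) (xc D i) (xb D i) by stp Ki.
    have Bad : connect (sr (flip K i)) (xa D i) (xd D i).
      case/or3P: hCL => h; first by case/negP: nc; exact: r0_sr h.
        by case/negP: nc; apply: connect_trans (r0_sr h) cb.
      exact: r0_srf h.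
    move=> u; rewrite !inE => /or4P [] /eqP ->; rewrite ?connect0 //; try by stp Ki.
    by apply: connect_trans Bad _; stp Ki.
  have dc : connect (sr K) (xd D i) (xc D i) by stp Ki.
  have Bab : connect (sr (flip K i)) (xa D i) (xb D i).
    case/or3P: hCL => h; first exact: r0_srf h.
      by case/negP: nc; exact: r0_sr h.
    by case/negP: nc; apply: connect_trans (r0_sr h) dc.
  move=> u; rewrite !inE => /or4P [] /eqP ->; rewrite ?connect0 //; try by stp Ki.
  by apply: connect_trans Bab _; stp Ki.
move=> x y; apply: connect_sub => u v /(sr_flip i) /orP [h|/andP [uT vT]]; first exact: connect1.
by apply: connect_trans (Tc v vT); rewrite conn_sym; apply: Tc.
Qed.

Lemma GQ K i x y : connect (sr (flip K i)) x y ->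
  connect (sr K) x y || (Ucl K i x && Ucl K i y).
Proof.
apply: (connect_inv (P := fun z => connect (sr K) x z || (Ucl K i x && Ucl K i z))); last first.
  by rewrite connect0.
move=> y' z /orP Py st; case/orP: (sr_flip_back st) => [st'|/andP [yT zT]].
  case: Py => [h|/andP [Ux Uy]]; first by rewrite (connect_trans h (connect1 st')).
  by rewrite Ux (Ucl_trans Uy (connect1 st')) orbT.
apply/orP; right; rewrite (TU _ zT) andbT.
by case: Py => [h|/andP [//]]; apply: Ucl_back (TU K yT) h.
Qed.

End G.


Section L.
Import GRing.Theory.
Local Open Scope ring_scope.
Variables (E : finType) (n : nat) (D : pd E n) (F : fieldType).
Local Notation sr := (smooth_rel D).
Local Notation CC := (C D F).

Lemma ffun_add (u v : CC) h : (u + v) h = u h + v h.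
Proof. by rewrite ffunE. Qed.
Lemma ffun_zero h : (0 : CC) h = 0.
Proof. by rewrite ffunE. Qed.

Lemma linext_add f (u v : CC) : linext f (u + v) = linext f u + linext f v.
Proof.
apply/ffunP => h; rewrite !ffunE -big_split /=; apply: eq_bigr => g _.
by rewrite ffunE mulrDl.
Qed.

Lemma linext0 f : linext f (0 : CC) = 0.
Proof. by apply/ffunP => h; rewrite !ffunE big1 // => g _; rewrite ffunE mul0r. Qed.

Lemma linext_sum f (I : finType) (P : pred I) (u : I -> CC) :
  linext f (\sum_(i | P i) u i) = \sum_(i | P i) linext f (u i).
Proof.
apply/ffunP => h; rewrite ffunE !sum_ffunE.
under eq_bigr do rewrite sum_ffunE mulr_suml.
rewrite exchange_big /=; apply: eq_bigr => i _; by rewrite ffunE.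
Qed.

Lemma linext_scal f (c : F) (u : CC) :
  linext f [ffun h => c * u h] = [ffun h => c * linext f u h].
Proof.
apply/ffunP => h; rewrite !ffunE mulr_sumr; apply: eq_bigr => g _; by rewrite ffunE mulrA.
Qed.

Lemma linext_comp f f' (v : CC) :
  linext f' (linext f v) = linext (fun I S => linext f' (f I S)) v.
Proof.
apply/ffunP => h; rewrite !ffunE.
under eq_bigr do rewrite ffunE mulr_suml.
rewrite exchange_big /=; apply: eq_bigr => g _; rewrite ffunE mulr_sumr.
by apply: eq_bigr => g' _; rewrite mulrA.
Qed.

Lemma linext_plus f f' (v : CC) :
  linext f v + linext f' v = linext (fun I S => f I S + f' I S) v.
Proof.
apply/ffunP => h; rewrite !ffunE -big_split; apply: eq_bigr => g _; by rewrite ffunE mulrDr.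
Qed.

Lemma linext_ext f f' (v : CC) :
  (forall g : gen D, f (val g).1 (val g).2 = f' (val g).1 (val g).2) ->
  linext f v = linext f' v.
Proof. by move=> e; apply/ffunP => h; rewrite !ffunE; apply: eq_bigr => g _; rewrite e. Qed.

Lemma linext_bvec f I S :
  linext f (bvec D F I S) = if closedb D I S then f I S else 0.
Proof.
apply/ffunP => h; rewrite ffunE; case: ifP => cl.
  pose g0 : gen D := exist _ (I, S) cl.
  rewrite (bigD1 g0) //= big1 => [|g ng].
    by rewrite ffunE eqxx mul1r addr0.
  rewrite ffunE; case: eqP => [e|]; last by rewrite mul0r.
  by case/negP: ng; apply/eqP/val_inj.
rewrite ffunE big1 // => g _; rewrite ffunE; case: eqP => [e|]; last by rewrite mul0r.
by case: g e => [[I0 S0] c] /= [eI eS]; move: c; rewrite /= eI eS cl.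
Qed.

Lemma Xp_bvec p I S : Xp p (bvec D F I S) =
  if closedb D I S then (if p \in S then 0 else bvec D F I (S :|: circ D I p)) else 0.
Proof. exact: linext_bvec. Qed.


Lemma closedP I (S : {set E}) :
  reflect (forall e f, connect (sr I) e f -> (e \in S) = (f \in S)) (closedb D I S).
Proof.
apply: (iffP forallP) => [h e f c | h e].
  by have /forallP/(_ f)/implyP/(_ c)/eqP := h e.
by apply/forallP=> f; apply/implyP=> c; apply/eqP; exact: h.
Qed.

Lemma closed_fw I (S : {set E}) :
  (forall e f, connect (sr I) e f -> e \in S -> f \in S) -> closedb D I S.
Proof.
move=> h; apply/closedP => e f c; apply/idP/idP; first exact: h.
by apply: h; rewrite conn_sym.
Qed.

Lemma closed_circ I x : closedb D I (circ D I x).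
Proof. by apply: closed_fw => e f c; rewrite !inE => h; apply: connect_trans h c. Qed.

Lemma closed_U I (S S' : {set E}) : closedb D I S -> closedb D I S' -> closedb D I (S :|: S').
Proof.
move=> /closedP h /closedP h'; apply/closedP => e f c; by rewrite !inE (h _ _ c) (h' _ _ c).
Qed.

Lemma closed_closure I (S : {set E}) : closedb D I (Defs.closure D I S).
Proof.
apply: closed_fw => e f c; rewrite !inE => /existsP [g /andP [gS ge]].
by apply/existsP; exists g; rewrite gS (connect_trans ge c).
Qed.

Lemma closed_in I (S : {set E}) e f : closedb D I S -> connect (sr I) e f -> e \in S -> f \in S.
Proof. by move=> /closedP h c; rewrite (h _ _ c). Qed.

End L.


Section PS.
Import GRing.Theory.
Local Open Scope ring_scope.
Variables (E : finType) (n : nat) (D : pd E n) (F : fieldType).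
Hypothesis hD : pd_wf D.
Local Notation sr := (smooth_rel D).

Ltac stp2 Ki := apply: connect1; match type of Ki with ?K ?j = _ => apply: (@sr_i _ _ D _ j) end;
  rewrite ?flip_i Ki /pair_match !eqxx /= ?orbT.

Lemma reps1 (K : state n) i : (reps D (flip K i) i).1 = (reps D K i).1.
Proof. by rewrite /reps flip_i; case: (K i). Qed.

Lemma repsT (K : state n) i : ((reps D K i).1 \in T D i) && ((reps D K i).2 \in T D i).
Proof. by rewrite /reps /T; case: (K i); rewrite !inE !eqxx ?orbT. Qed.

Lemma Xp_add p (u v : C D F) : Xp p (u + v) = Xp p u + Xp p v.
Proof. exact: linext_add. Qed.

Lemma PS (K : state n) i (S : {set E}) p : closedb D K S ->
  Xp p (saddle D F K (flip K i) i S) =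
  if p \in S then 0 else saddle D F K (flip K i) i (S :|: circ D K p).
Proof.
move=> hS.
have Xp0 : Xp p (0 : C D F) = 0 := linext0 _.
rewrite /saddle /=.
set J := flip K i.
set s1 := (reps D K i).1; set s2 := (reps D K i).2.
set t1 := (reps D J i).1; set t2 := (reps D J i).2.
have e1 : t1 = s1 by exact: reps1.
have fJ : flip J i = K by rewrite /J flipK.
case: (boolP (connect (sr K) s1 s2)) => cs /=.
  case: (boolP (connect (sr J) t1 t2)) => ct /=.
    by rewrite Xp0; case: ifP.
  have KLJ x y : connect (sr J) x y -> connect (sr K) x y.
    by have := @KL _ _ D hD J i; rewrite fJ; apply.
  have GQJ x y : connect (sr K) x y -> connect (sr J) x y || (Ucl D J i x && Ucl D J i y).
    by have := @GQ _ _ D J i x y; rewrite fJ.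
  have Ts1 u : u \in T D i -> connect (sr K) s1 u.
    by move=> /(TU K) /orP [//|h]; exact: connect_trans cs h.
  have t2T : t2 \in T D i by case/andP: (repsT J i).
  have Vd x : connect (sr K) s1 x = Ucl D J i x.
    rewrite /Ucl -/t1 -/t2 e1; apply/idP/idP => h.
      case/orP: (GQJ _ _ h) => [->//|/andP [_ h2]]; by rewrite /Ucl -/t1 -/t2 e1 in h2.
    case/orP: h => h; first exact: KLJ h.
    exact: connect_trans (Ts1 _ t2T) (KLJ _ _ h).
  have hSJ : closedb D J S.
    by apply/closedP => e f c; apply: (elimT (closedP _ _ _) hS); apply: KLJ.
  have PKJ : ~~ connect (sr K) p s1 -> circ D K p = circ D J p.
    move=> nps; apply/setP => x; rewrite !inE; apply/idP/idP => h; last exact: KLJ.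
    case/orP: (GQJ _ _ h) => [//|/andP [Up _]].
    by case/negP: nps; rewrite conn_sym Vd.
  have CJ x : closedb D J (S :|: circ D J x) := closed_U hSJ (closed_circ _ _ _).
  case pS: (p \in S).
    case: ifP => s1S; first by rewrite Xp_bvec hSJ pS.
    by rewrite Xp_add !Xp_bvec !CJ !inE pS addr0.
  case s1S: (s1 \in S).
    rewrite Xp_bvec hSJ pS in_setU s1S /= PKJ //.
    apply/negP => h; by rewrite (closed_in hS _ s1S) // conn_sym in pS.
  rewrite in_setU s1S /= inE.
  rewrite Xp_add !Xp_bvec !CJ !in_setU pS /= !inE.
  case Aps: (connect (sr K) p s1).
    have UJp : Ucl D J i p by rewrite -Vd conn_sym.
    have hK x : connect (sr K) p x = connect (sr K) s1 x.
      apply/idP/idP => h; first by apply: connect_trans h; rewrite conn_sym.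
      exact: connect_trans Aps h.
    move: UJp; rewrite /Ucl -/t1 -/t2 => /orP [h|h].
      have nh : connect (sr J) t2 p = false.
        apply/negbTE; apply: contra ct => h2; apply: connect_trans h _; by rewrite conn_sym.
      rewrite h nh add0r; congr bvec; apply/setP => x; rewrite !inE hK Vd /Ucl -/t1 -/t2.
      have -> : connect (sr J) p x = connect (sr J) t1 x.
        apply/idP/idP => h'; first exact: connect_trans h h'.
        by apply: connect_trans h'; rewrite conn_sym.
      by case: (x \in S); case: (connect (sr J) t1 x); case: (connect (sr J) t2 x).
    have nh : connect (sr J) t1 p = false.
      apply/negbTE; apply: contra ct => h2; apply: connect_trans h2 _; by rewrite conn_sym.
    rewrite h nh addr0; congr bvec; apply/setP => x; rewrite !inE hK Vd /Ucl -/t1 -/t2.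
    have -> : connect (sr J) p x = connect (sr J) t2 x.
      apply/idP/idP => h'; first exact: connect_trans h h'.
      by apply: connect_trans h'; rewrite conn_sym.
    by case: (x \in S); case: (connect (sr J) t1 x); case: (connect (sr J) t2 x).
  have n1 : connect (sr J) t1 p = false.
    apply/negbTE/negP => h; have : Ucl D J i p by rewrite /Ucl -/t1 h.
    by rewrite -Vd conn_sym Aps.
  have n2 : connect (sr J) t2 p = false.
    apply/negbTE/negP => h; have : Ucl D J i p by rewrite /Ucl -/t1 -/t2 h orbT.
    by rewrite -Vd conn_sym Aps.
  by rewrite n1 n2 (PKJ (negbT Aps)) setUAC [in X in _ + X]setUAC.
have KLh x y : connect (sr K) x y -> connect (sr J) x y := @KL _ _ D hD K i cs x y.
have BU x y : connect (sr J) x y -> connect (sr K) x y || (Ucl D K i x && Ucl D K i y) := @GQ _ _ D K i x y.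
have Bs12 : connect (sr J) s1 s2.
  rewrite /s1 /s2 /J /reps; case Ki: (K i) => /=.
    by stp2 Ki.
  apply: (connect_trans (y := xd D i)); first by stp2 Ki.
  by apply: KLh; stp2 Ki.
have cl_eq : Defs.closure D J (S :|: circ D K p) = Defs.closure D J S :|: circ D J p.
  apply/setP => x; rewrite !inE; apply/existsP/idP => [[f /andP [fS fx]]|].
    rewrite !inE in fS; case/orP: fS => [fS|pf].
      by apply/orP; left; apply/existsP; exists f; rewrite fS fx.
    by apply/orP; right; exact: connect_trans (KLh _ _ pf) fx.
  case/orP => [/existsP [f /andP [fS fx]]|px].
    by exists f; rewrite !inE fS fx.
  by exists p; rewrite !inE connect0 px orbT.
case pS: (p \in S).
  case: ifP => _; first by rewrite Xp0.
  rewrite Xp_bvec closed_closure.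
  suff -> : p \in Defs.closure D J S by [].
  by rewrite inE; apply/existsP; exists p; rewrite pS connect0.
rewrite !in_setU.
case h12: ((s1 \in S) && (s2 \in S)).
  by rewrite Xp0; move/andP: h12 => [-> ->].
rewrite Xp_bvec closed_closure.
case pc: (p \in Defs.closure D J S).
  suff -> : ((s1 \in S) || (s1 \in circ D K p)) && ((s2 \in S) || (s2 \in circ D K p)) by [].
  move: pc; rewrite inE => /existsP [f /andP [fS fp]].
  case/orP: (BU _ _ fp) => [Afp|/andP [Uf Up]].
    by rewrite (closed_in hS Afp fS) in pS.
  rewrite !inE.
  move: Uf Up; rewrite /Ucl -/s1 -/s2 => /orP [f1|f2] /orP [p1|p2].
  - have s1S : s1 \in S by apply: closed_in hS _ fS; rewrite conn_sym.
    by rewrite (closed_in hS p1 s1S) in pS.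
  - have s1S : s1 \in S by apply: closed_in hS _ fS; rewrite conn_sym.
    by rewrite s1S (conn_sym D K p s2) p2 orbT.
  - have s2S : s2 \in S by apply: closed_in hS _ fS; rewrite conn_sym.
    by rewrite s2S (conn_sym D K p s1) p1 orbT.
  - have s2S : s2 \in S by apply: closed_in hS _ fS; rewrite conn_sym.
    by rewrite (closed_in hS p2 s2S) in pS.
suff -> : ((s1 \in S) || (s1 \in circ D K p)) && ((s2 \in S) || (s2 \in circ D K p)) = false.
  by rewrite cl_eq.
apply/negbTE/negP; rewrite !inE => /andP [h1 h2].
case/orP: h1 => [s1S|p1]; case/orP: h2 => [s2S|p2].
- by rewrite s1S s2S in h12.
- suff : p \in Defs.closure D J S by rewrite pc.
  rewrite inE; apply/existsP; exists s1; rewrite s1S /=.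
  by apply: connect_trans Bs12 (KLh _ _ _); rewrite conn_sym.
- suff : p \in Defs.closure D J S by rewrite pc.
  rewrite inE; apply/existsP; exists s2; rewrite s2S /=.
  have h1 : connect (sr J) s2 s1 by rewrite conn_sym.
  have h2 : connect (sr J) s1 p by apply: KLh; rewrite conn_sym.
  exact: connect_trans h1 h2.
- by case/negP: cs; apply: connect_trans p2; rewrite conn_sym.
Qed.

End PS.

Unset Implicit Arguments.
Local Open Scope ring_scope.
Import GRing.Theory.


Theorem proposition6p3 (F : fieldType) (hF : 2%N \in [pchar F])
  (E : finType) (n : nat) (D : pd E n) (hD : pd_wf D)
  (w : E -> F) (hw : forall e f, connect (link_rel D) e f -> w e = w f)
  (sgn : 'I_n -> bool) (p : E) :
  forall v : C D F, dd sgn w (Xp p v) = Xp p (dd sgn w v).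
Proof.
move=> v.
have Xsum (P : pred 'I_n) (u : 'I_n -> C D F) :
  Xp p (\sum_(i | P i) u i) = \sum_(i | P i) Xp p (u i) := linext_sum _ _ _.
have Xsc (c : F) (u : C D F) : Xp p [ffun h => c * u h] = [ffun h => c * Xp p u h]
  := linext_scal _ _ _.
have XpE (u : C D F) : linext (fun I S => if p \in S then 0 else bvec D F I (S :|: circ D I p)) u = Xp p u := erefl.
rewrite /dd Xp_add /d0 /d1.
rewrite [linext _ (Xp p v)]linext_comp [linext _ (Xp p v)]linext_comp.
rewrite [Xp p (linext _ v)]linext_comp [Xp p (linext _ v)]linext_comp.
congr (_ + _); apply: linext_ext => -[[I S] hS] /=.
  rewrite XpE Xsum; under eq_bigr => i _ do rewrite (PS F hD i p hS).
  case: (p \in S).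
    by rewrite linext0 big1.
  by rewrite linext_bvec closed_U // closed_circ.
rewrite XpE Xsum; under eq_bigr => i _ do rewrite Xsc (PS F hD i p hS).
case: (p \in S).
  rewrite linext0 big1 // => i _; apply/ffunP => h; by rewrite !ffunE mulr0.
by rewrite linext_bvec closed_U // closed_circ.
Qed.
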